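(* Let $n>r$ and let $1_r:=1_{(1,\dots,1,0,\dots,0)}$ ($r$ ones followed by $n-r$ zeros). Let $A$ be a $\mathbb{Q}(q)$-algebra and $f\colon\hat S(n,r)\to A$ a surjective $\mathbb{Q}(q)$-algebra homomorphism whose restriction to $1_r\hat S(n,r)1_r$ is injective. Then $f$ is an isomorphism of $\mathbb{Q}(q)$-algebras $\hat S(n,r)\cong A$.
   Context: Fix integers $n\ge3$, $r\ge3$; indices are read modulo $n$. $\hat U=\hat{\mathbf U}_q(\hat{\mathfrak{gl}}_n)$ is the associative unital $\mathbb{Q}(q)$-algebra generated by $R^{\pm1}$, $K_i^{\pm1}$, $E_i$, $E_{-i}$ ($1\le i\le n$) subject to: the $K_i^{\pm1}$ pairwise commute and $K_iK_i^{-1}=K_i^{-1}K_i=1$; $E_iE_{-j}-E_{-j}E_i=\delta_{ij}\frac{K_iK_{i+1}^{-1}-K_i^{-1}K_{i+1}}{q-q^{-1}}$; $K_iE_{\pm j}=q^{\pm(\delta_{i,j}-\delta_{i,j+1})}E_{\pm j}K_i$; for $\epsilon,\delta\in\{1,-1\}$, $E_{\epsilon i}^2E_{\epsilon(i+\delta)}-(q+q^{-1})E_{\epsilon i}E_{\epsilon(i+\delta)}E_{\epsilon i}+E_{\epsilon(i+\delta)}E_{\epsilon i}^2=0$; $E_{\epsilon i}E_{\epsilon j}=E_{\epsilon j}E_{\epsilon i}$ if $j\not\equiv i\pm1\pmod n$; $RR^{-1}=R^{-1}R=1$; $RXR^{-1}=X'$ for $(X,X')\in\{(E_i,E_{i+1}),(E_{-i},E_{-(i+1)}),(K_i^{-1},K_{i+1}^{-1})\}$.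 The coproduct $\Delta$ is the algebra map with $\Delta(E_i)=E_i\otimes K_iK_{i+1}^{-1}+1\otimes E_i$, $\Delta(E_{-i})=K_i^{-1}K_{i+1}\otimes E_{-i}+E_{-i}\otimes1$, $\Delta(K_i^{\pm1})=K_i^{\pm1}\otimes K_i^{\pm1}$, $\Delta(R^{\pm1})=R^{\pm1}\otimes R^{\pm1}$. $V$ is the $\mathbb{Q}(q)$-vector space with basis $\{e_t\}_{t\in\mathbb{Z}}$, a $\hat U$-module via: $E_ie_{t+1}=e_t$ if $i\equiv t\pmod n$ and $0$ otherwise; $E_{-i}e_t=e_{t+1}$ if $i\equiv t\pmod n$ and $0$ otherwise; $K_i^{\pm1}e_t=q^{\pm1}e_t$ if $i\equiv t\pmod n$ and $e_t$ otherwise; $R^{\pm1}e_t=e_{t\pm1}$; $\hat U$ acts on $V^{\otimes r}$ via the iterated coproduct, giving $\psi_{n,r}\colon\hat U\to\mathrm{End}_{\mathbb{Q}(q)}(V^{\otimes r})$. The affine $q$-Schur algebra is $\hat S(n,r):=\psi_{n,r}(\hat U)$ (by affine Schur–Weyl duality this equals the centralizer of the natural right action of the extended affine Hecke algebra of type $\hat A_{r-1}$ on $V^{\otimes r}$). $\Lambda(n,r)=\{\lambda\in\mathbb{N}^n:\sum_i\lambda_i=r\}$; for $\lambda\in\Lambda(n,r)$, $1_\lambda\in\hat S(n,r)$ is the projection of $V^{\otimes r}$ onto the span of those $e_{t_1}\otimes\cdots\otimes e_{t_r}$ with $\#\{j: t_j\equiv i\pmod n\}=\lambda_i$ for all $i$.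 *)

(* Defs.v *)
From HB Require Import structures.
From mathcomp Require Import all_boot all_order all_algebra.
Set Implicit Arguments. Unset Strict Implicit. Unset Printing Implicit Defensive.
Import Order.TTheory GRing.Theory Num.Theory.
Local Open Scope ring_scope.

Definition Kq : fieldType := {fraction {poly rat}}.
Definition q : Kq := tofrac ('X : {poly rat}).

Section AffineSchur.
Variables n r : nat.

(* Basis of V^{(x) r}: e_{t_1} (x) ... (x) e_{t_r}, indexed by (t_1..t_r) in Z^r
   (tensor position l+1 <-> l : 'I_r). *)
Definition Idx := {ffun 'I_r -> int}.

(* Vectors of V^{(x)r}: finitely supported coordinate functions. *)
Definition fsupp (v : Idx -> Kq) : Prop :=
  exists s : seq Idx, forall j, j \notin s -> v j = 0.

Record Vec := MkVec { vfun :> Idx -> Kq; vfin : fsupp vfun }.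

Lemma fsupp0 : fsupp (fun _ => 0).
Proof. by exists [::]. Qed.

Lemma fsuppD (u v : Idx -> Kq) : fsupp u -> fsupp v -> fsupp (fun j => u j + v j).
Proof.
move=> [s1 H1] [s2 H2]; exists (s1 ++ s2) => j.
by rewrite mem_cat negb_or => /andP[/H1 -> /H2 ->]; rewrite addr0.
Qed.

Lemma fsuppZ (c : Kq) (v : Idx -> Kq) : fsupp v -> fsupp (fun j => c * v j).
Proof. by move=> [s H]; exists s => j /H ->; rewrite mulr0. Qed.

Lemma fsupp_mono (c : Idx -> Kq) (tau tau' : Idx -> Idx) :
  cancel tau tau' -> forall v, fsupp v -> fsupp (fun j => c j * v (tau j)).
Proof.
move=> H v [s Hs]; exists (map tau' s) => j Hj; rewrite Hs ?mulr0 //.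
by apply: contra Hj => Hin; rewrite -(H j); apply: map_f.
Qed.

Definition End := Vec -> Vec.
Definition vzero : Vec := MkVec fsupp0.
Definition ezero : End := fun _ => vzero.
Definition eid : End := fun v => v.
Definition eadd (x y : End) : End := fun v => MkVec (fsuppD (vfin (x v)) (vfin (y v))).
Definition escale (c : Kq) (x : End) : End := fun v => MkVec (fsuppZ c (vfin (x v))).
Definition ecomp (x y : End) : End := fun v => x (y v).
Definition esum (xs : seq End) : End := foldr eadd ezero xs.

Definition emono (c : Idx -> Kq) (tau tau' : Idx -> Idx) (H : cancel tau tau') : End :=
  fun v => MkVec (fsupp_mono c H (vfin v)).

Definition shift (k : 'I_r) (d : int) (j : Idx) : Idx :=
  [ffun l => if l == k then j l + d else j l].
Definition shiftall (d : int) (j : Idx) : Idx := [ffun l => j l + d].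

Lemma shiftK k d : cancel (shift k d) (shift k (- d)).
Proof.
move=> j; apply/ffunP => l; rewrite !ffunE; case: eqP => // _.
by rewrite addrK.
Qed.

Lemma shiftallK d : cancel (shiftall d) (shiftall (- d)).
Proof. by move=> j; apply/ffunP => l; rewrite !ffunE addrK. Qed.

Lemma idK : cancel (@id Idx) id.
Proof. by []. Qed.

Definition congr (i : nat) (t : int) : bool := (n%:Z %| t - i%:Z)%Z.
Definition ind (b : bool) : int := if b then 1 else 0.
(* exponent of q in the eigenvalue of K_i K_{i+1}^{-1} on e_t *)
Definition Kt (i : nat) (t : int) : int := ind (congr i t) - ind (congr i.+1 t).

(* Images under psi_{n,r} of the generators, via the iterated coproduct. *)
Definition genK (i : nat) (e : int) : End :=
  emono (fun j => \prod_(l < r) q ^ (e * ind (congr i (j l)))) idK.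
Definition genR : End := emono (fun _ => 1) (shiftallK (-1)).
Definition genRinv : End := emono (fun _ => 1) (shiftallK 1).
(* E_i = sum_k 1^{(x)(k-1)} (x) E_i (x) (K_iK_{i+1}^{-1})^{(x)(r-k)} *)
Definition genE (i : nat) : End :=
  esum [seq emono (fun j => (ind (congr i (j k)))%:~R *
                     \prod_(l < r | (k < l)%N) q ^ Kt i (j l)) (shiftK k 1)
       | k <- enum 'I_r].
(* E_{-i} = sum_k (K_i^{-1}K_{i+1})^{(x)(k-1)} (x) E_{-i} (x) 1^{(x)(r-k)} *)
Definition genF (i : nat) : End :=
  esum [seq emono (fun j => (ind (congr i (j k - 1)))%:~R *
                     \prod_(l < r | (l < k)%N) q ^ (- Kt i (j l))) (shiftK k (-1))
       | k <- enum 'I_r].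

Definition isGen (x : End) : Prop :=
  (exists i : nat, [/\ (0 < i)%N, (i <= n)%N &
      [\/ x = genE i, x = genF i, x = genK i 1 | x = genK i (-1)]])
  \/ x = genR \/ x = genRinv.

(* hat S(n,r) = psi_{n,r}(hat U) = the unital Q(q)-subalgebra of End(V^{(x)r})
   generated by the images of the generators. *)
Inductive inS : End -> Prop :=
| inS_gen x : isGen x -> inS x
| inS_id : inS eid
| inS_add x y : inS x -> inS y -> inS (eadd x y)
| inS_scale c x : inS x -> inS (escale c x)
| inS_mul x y : inS x -> inS y -> inS (ecomp x y).

(* 1_r = 1_lambda, lambda = (1,..,1,0,..,0) (r ones): lambda_{i+1} = [i < r]. *)
Definition one_r : End :=
  emono (fun j => if [forall i : 'I_n,
                        #|[pred l : 'I_r | congr i.+1 (j l)]| == ((i : nat) < r)%N]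
                  then 1 else 0) idK.

Definition corner (x : End) : End := ecomp one_r (ecomp x one_r).

End AffineSchur.

(* Main.v *)
Require Import Defs.
From HB Require Import structures.
From mathcomp Require Import all_boot all_order all_algebra.
From Stdlib Require Import ProofIrrelevance FunctionalExtensionality Classical.
From mathcomp Require Import ring zify.
Import GRing.Theory.
Local Open Scope ring_scope.
Set Implicit Arguments. Unset Strict Implicit.

Section Basic.
Variable r : nat.

Lemma vec_ext (u v : Vec r) : (forall j, u j = v j) -> u = v.
Proof.
case: u => u hu; case: v => v hv /= H.
have E : u = v by apply: functional_extensionality.
subst v; congr MkVec; apply: proof_irrelevance.
Qed.

Lemma end_ext (x y : End r) : (forall v j, x v j = y v j) -> x = y.
Proof.
move=> H; apply: functional_extensionality => v; apply: vec_ext; exact: H.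
Qed.

Definition D (c : Idx r -> Kq) : End r := emono c (@idK r).

Lemma DE (c : Idx r -> Kq) (v : Vec r) j : D c v j = c j * v j. Proof. by []. Qed.
Lemma emonoE (c : Idx r -> Kq) (tau tau' : Idx r -> Idx r) (H : cancel tau tau') v j : emono c H v j = c j * v (tau j).
Proof. by []. Qed.
Lemma eaddE (x y : End r) (v : Vec r) j : eadd x y v j = x v j + y v j. Proof. by []. Qed.
Lemma escaleE c (x : End r) (v : Vec r) j : escale c x v j = c * x v j. Proof. by []. Qed.
Lemma ecompE (x y : End r) (v : Vec r) j : ecomp x y v j = x (y v) j. Proof. by []. Qed.
Lemma eidE (v : Vec r) j : (@eid r) v j = v j. Proof. by []. Qed.
Lemma ezeroE (v : Vec r) j : (@ezero r) v j = 0. Proof. by []. Qed.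

Lemma esumE (xs : seq (End r)) (v : Vec r) j : esum xs v j = \sum_(x <- xs) x v j.
Proof.
elim: xs => [|x xs IH]; first by rewrite big_nil.
by rewrite big_cons /= -IH.
Qed.

Lemma esum_mapE (I : eqType) (s : seq I) (g : I -> End r) (v : Vec r) j :
  esum [seq g k | k <- s] v j = \sum_(k <- s) g k v j.
Proof. by rewrite esumE big_map. Qed.

Definition lin (x : End r) : Prop :=
  forall (a b : Kq) (u w z : Vec r), (forall j, z j = a * u j + b * w j) ->
    forall j, x z j = a * x u j + b * x w j.

Lemma lin_emono (c : Idx r -> Kq) (tau tau' : Idx r -> Idx r) (H : cancel tau tau') : lin (emono c H).
Proof. move=> a b u w z Hz j; rewrite !emonoE Hz; ring. Qed.

Lemma lin_eadd (x y : End r) : lin x -> lin y -> lin (eadd x y).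
Proof.
move=> Hx Hy a b u w z Hz j; rewrite !eaddE (Hx _ _ _ _ _ Hz) (Hy _ _ _ _ _ Hz); ring.
Qed.

Lemma lin_escale c (x : End r) : lin x -> lin (escale c x).
Proof. move=> Hx a b u w z Hz j; rewrite !escaleE (Hx _ _ _ _ _ Hz); ring. Qed.

Lemma lin_ecomp (x y : End r) : lin x -> lin y -> lin (ecomp x y).
Proof. move=> Hx Hy a b u w z Hz j; rewrite !ecompE; apply: Hx; exact: Hy. Qed.

Lemma lin_eid : lin (@eid r).
Proof. by move=> a b u w z Hz j; rewrite !eidE. Qed.

Lemma lin_ezero : lin (@ezero r).
Proof. by move=> a b u w z Hz j; rewrite !ezeroE; ring. Qed.

Lemma lin_esum_map (I : Type) (s : seq I) (g : I -> End r) :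
  (forall k, lin (g k)) -> lin (esum [seq g k | k <- s]).
Proof.
move=> H; elim: s => [|k s IH] /=; first exact: lin_ezero.
exact: lin_eadd.
Qed.

Lemma lin_zero (x : End r) : lin x -> forall u : Vec r, (forall j, u j = 0) -> forall j, x u j = 0.
Proof.
move=> Hx u Hu j; rewrite (Hx 0 0 u u u) ?mul0r ?addr0 // => i.
by rewrite Hu mul0r addr0.
Qed.

Lemma lin_add (x : End r) : lin x -> forall u w z : Vec r, (forall j, z j = u j + w j) ->
  forall j, x z j = x u j + x w j.
Proof.
move=> Hx u w z Hz j; rewrite (Hx 1 1 u w z) ?mul1r // => i; by rewrite Hz !mul1r.
Qed.

Lemma lin_scale (x : End r) : lin x -> forall c (u z : Vec r), (forall j, z j = c * u j) ->
  forall j, x z j = c * x u j.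
Proof.
move=> Hx c u z Hz j; rewrite (Hx c 0 u u z) ?mul0r ?addr0 // => i.
by rewrite Hz mul0r addr0.
Qed.

End Basic.
Section Alg.
Variables (n r : nat).
Notation inS := (@inS n r).

Lemma lin_inS x : inS x -> lin x.
Proof.
elim=> {x} [x [[i [_ _ [->|->|->|->]]]|[->|->]]||x y _ Hx _ Hy|c x _ Hx|x y _ Hx _ Hy].
- by apply: lin_esum_map => k; apply: lin_emono.
- by apply: lin_esum_map => k; apply: lin_emono.
- exact: lin_emono.
- exact: lin_emono.
- exact: lin_emono.
- exact: lin_emono.
- exact: lin_eid.
- exact: lin_eadd.
- exact: lin_escale.
- exact: lin_ecomp.
Qed.

Lemma D_ext (c1 c2 : Idx r -> Kq) : (forall j, c1 j = c2 j) -> D c1 = D c2.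
Proof. by move=> H; apply: end_ext => v j; rewrite !DE H. Qed.

Lemma D_mul (c1 c2 : Idx r -> Kq) : ecomp (D c1) (D c2) = D (fun j => c1 j * c2 j).
Proof. by apply: end_ext => v j; rewrite ecompE !DE mulrA. Qed.

Lemma D_add (c1 c2 : Idx r -> Kq) : eadd (D c1) (D c2) = D (fun j => c1 j + c2 j).
Proof. by apply: end_ext => v j; rewrite eaddE !DE mulrDl. Qed.

Lemma D_scale a (c : Idx r -> Kq) : escale a (D c) = D (fun j => a * c j).
Proof. by apply: end_ext => v j; rewrite escaleE !DE mulrA. Qed.

Lemma D_one : D (fun _ => 1) = @eid r.
Proof. by apply: end_ext => v j; rewrite DE mul1r. Qed.

Lemma D_zero : D (fun _ => 0) = @ezero r.
Proof. by apply: end_ext => v j; rewrite DE mul0r. Qed.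

Lemma inS_zero : inS (@ezero r).
Proof.
have -> : @ezero r = escale 0 (@eid r) by apply: end_ext => v j; rewrite escaleE mul0r.
by apply: inS_scale; apply: inS_id.
Qed.

Lemma inS_D_const a : inS (D (fun _ => a)).
Proof.
have -> : D (fun _ => a) = escale a (@eid r) by apply: end_ext => v j; rewrite DE escaleE.
by apply: inS_scale; apply: inS_id.
Qed.

Lemma inS_D_mul (c1 c2 : Idx r -> Kq) : inS (D c1) -> inS (D c2) ->
  inS (D (fun j => c1 j * c2 j)).
Proof. by move=> H1 H2; rewrite -D_mul; apply: inS_mul. Qed.

Lemma inS_D_add (c1 c2 : Idx r -> Kq) : inS (D c1) -> inS (D c2) ->
  inS (D (fun j => c1 j + c2 j)).
Proof. by move=> H1 H2; rewrite -D_add; apply: inS_add. Qed.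

Lemma inS_D_scale a (c : Idx r -> Kq) : inS (D c) -> inS (D (fun j => a * c j)).
Proof. by move=> H; rewrite -D_scale; apply: inS_scale. Qed.

Lemma inS_D_poly (x : Idx r -> Kq) : inS (D x) -> forall P : {poly Kq},
  inS (D (fun j => P.[x j])).
Proof.
move=> Hx; elim/poly_ind => [|P c IH].
  by rewrite (D_ext (c2 := fun _ => 0)) => [|j]; [apply: inS_D_const|rewrite horner0].
rewrite (D_ext (c2 := fun j => P.[x j] * x j + c)) => [|j]; last by rewrite hornerMXaddC.
by apply: inS_D_add; [apply: inS_D_mul|apply: inS_D_const].
Qed.

Lemma inS_D_prod (I : Type) (s : seq I) (g : I -> Idx r -> Kq) :
  (forall i, inS (D (g i))) -> inS (D (fun j => \prod_(i <- s) g i j)).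
Proof.
move=> H; elim: s => [|i s IH].
  by rewrite (D_ext (c2 := fun _ => 1)) => [|j]; [apply: inS_D_const|rewrite big_nil].
rewrite (D_ext (c2 := fun j => g i j * \prod_(i <- s) g i j)) => [|j]; last by rewrite big_cons.
exact: inS_D_mul.
Qed.

End Alg.
Lemma qX_inj (a b : nat) : q ^+ a = q ^+ b -> a = b.
Proof.
rewrite /q -!tofracXn => /eqP; rewrite tofrac_eq => /eqP E.
by have := congr1 (fun p : {poly rat} => size p) E; rewrite !size_polyXn => [[]].
Qed.

Lemma q_neq0 : q != 0.
Proof. by rewrite /q tofrac_eq0 polyX_eq0. Qed.

Section Cnt.
Variables (n r : nat).
Notation inS := (@inS n r).

Definition cnt (i : nat) (j : Idx r) : nat := #|[pred l : 'I_r | congr n i (j l)]|.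
Definition kf (i : nat) (j : Idx r) : Kq := \prod_(l < r) q ^ (1 * ind (congr n i (j l))).

Lemma kfE i j : kf i j = q ^+ cnt i j.
Proof.
rewrite /kf /cnt -prodr_const (big_mkcond (fun l => congr n i (j l))) /=.
apply: eq_bigr => l _; rewrite mul1r /ind; case: ifP => _; first by rewrite expr1z.
by rewrite expr0z.
Qed.

Lemma genK1 (i : nat) : @genK n r i 1 = D (kf i).
Proof. by []. Qed.

Lemma inS_kf i : (0 < i <= n)%N -> inS (D (kf i)).
Proof.
move=> /andP [H1 H2]; rewrite -genK1; apply: inS_gen; left; exists i; split => //.
exact: Or43.
Qed.

Lemma cnt_le i j : (cnt i j <= r)%N.
Proof. by rewrite /cnt (leq_trans (max_card _)) ?card_ord. Qed.

Lemma inS_cnt_eq i a : (0 < i <= n)%N -> inS (D (fun j => ((cnt i j == a) : nat)%:R)).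
Proof.
move=> Hi.
pose P : {poly Kq} := \prod_(b < r.+1 | (b : nat) != a) ('X - (q ^+ b)%:P).
have HP m : P.[q ^+ m] = \prod_(b < r.+1 | (b : nat) != a) (q ^+ m - q ^+ b).
  by rewrite /P horner_prod; apply: eq_bigr => b _; rewrite hornerXsubC.
have Pa : P.[q ^+ a] != 0.
  rewrite HP; apply/prodf_neq0 => b hb; rewrite subr_eq0.
  by apply/eqP => /qX_inj E; move: hb; rewrite E eqxx.
have -> : D (fun j => ((cnt i j == a) : nat)%:R) =
          D (fun j => (P.[q ^+ a])^-1 * P.[kf i j]).
  apply: D_ext => j; rewrite kfE; case: eqP => [->|ne].
    by rewrite mulVf.
  have Hc : (cnt i j < r.+1)%N by rewrite ltnS cnt_le.
  rewrite (HP (cnt i j)) (bigD1 (Ordinal Hc)) /=; last by apply/eqP.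
  by rewrite subrr mul0r mulr0.
by apply: inS_D_scale; apply: inS_D_poly; apply: inS_kf.
Qed.

Definition Ind (lam : 'I_n -> nat) : End r :=
  D (fun j => if [forall c : 'I_n, cnt c.+1 j == lam c] then 1 else 0).

Lemma inS_Ind lam : inS (Ind lam).
Proof.
rewrite /Ind (D_ext (c2 := fun j => \prod_(c <- enum 'I_n) ((cnt c.+1 j == lam c) : nat)%:R)).
  apply: inS_D_prod => c; apply: inS_cnt_eq; by rewrite ltn_ord.
move=> j; rewrite big_enum /=; case: forallP => H.
  by rewrite big1 // => c _; rewrite H.
have [c Hc] : exists c : 'I_n, cnt c.+1 j != lam c.
  by apply/existsP; rewrite -negb_forall; apply/forallP.
by rewrite (bigD1 c) //= (negbTE Hc) mul0r.
Qed.

Lemma one_rE : @one_r n r = Ind (fun c => ((c : nat) < r)%N).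
Proof. by []. Qed.

Lemma inS_one_r : inS (@one_r n r).
Proof. rewrite one_rE; exact: inS_Ind. Qed.

End Cnt.
Section Ideal.
Variables (n r : nat).
Notation inS := (@inS n r).
Notation one := (@one_r n r).

Inductive Jset : End r -> Prop :=
| J_base a b : inS a -> inS b -> Jset (ecomp a (ecomp one b))
| J_add x y : Jset x -> Jset y -> Jset (eadd x y)
| J_scale c x : Jset x -> Jset (escale c x).

Lemma Jset_inS z : Jset z -> inS z.
Proof.
elim=> {z} [a b Ha Hb|x y _ Hx _ Hy|c x _ Hx].
- by apply: inS_mul => //; apply: inS_mul => //; apply: inS_one_r.
- exact: inS_add.
- exact: inS_scale.
Qed.

Lemma J_mull a z : inS a -> Jset z -> Jset (ecomp a z).
Proof.
move=> Ha; elim=> {z} [a' b Ha' Hb|x y _ Hx _ Hy|c x _ Hx].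
- by apply: (J_base (a := ecomp a a')) => //; apply: inS_mul.
- have -> : ecomp a (eadd x y) = eadd (ecomp a x) (ecomp a y); last exact: J_add.
  apply: end_ext => v j; rewrite ecompE eaddE !ecompE.
  by apply: (lin_add (lin_inS Ha)) => i; rewrite eaddE.
- have -> : ecomp a (escale c x) = escale c (ecomp a x); last exact: J_scale.
  apply: end_ext => v j; rewrite ecompE escaleE !ecompE.
  by apply: (lin_scale (lin_inS Ha)) => i; rewrite escaleE.
Qed.

Lemma J_mulr a z : inS a -> Jset z -> Jset (ecomp z a).
Proof.
move=> Ha; elim=> {z} [a' b Ha' Hb|x y _ Hx _ Hy|c x _ Hx].
- by apply: (J_base (b := ecomp b a)) => //; apply: inS_mul.
- exact: J_add.
- exact: J_scale.
Qed.

Lemma J_zero : Jset (@ezero r).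
Proof.
have -> : @ezero r = ecomp (@ezero r) (ecomp one (@eid r)).
  by apply: end_ext => v j.
by apply: J_base; [apply: inS_zero|apply: inS_id].
Qed.

Lemma J_eq x y : Jset x -> x = y -> Jset y.
Proof. by move=> H <-. Qed.

Definition Iid (d : End r) : Prop := inS d /\
  forall a b, inS a -> inS b -> corner n (ecomp b (ecomp d a)) = (@ezero r).

Lemma ecomp_zero (a b : End r) : lin a -> ecomp a (ecomp (@ezero r) b) = (@ezero r).
Proof.
move=> Ha; apply: end_ext => v j; rewrite !ecompE ezeroE.
by apply: (lin_zero Ha) => i.
Qed.

Lemma kill z : Jset z -> forall d w, Iid d -> Jset w -> ecomp z (ecomp d w) = (@ezero r).
Proof.
elim=> {z} [a b Ha Hb|x y _ Hx _ Hy|c x _ Hx] d w Hd.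
- elim=> {w} [a' b' Ha' Hb'|x y Jx Hx Jy Hy|c x Jx Hx].
  + have E := (proj2 Hd) a' b Ha' Hb.
    have -> : ecomp (ecomp a (ecomp one b)) (ecomp d (ecomp a' (ecomp one b')))
      = ecomp a (ecomp (corner n (ecomp b (ecomp d a'))) b') by reflexivity.
    by rewrite E ecomp_zero //; apply: (lin_inS (n:=n)).
  + have L : lin (ecomp (ecomp a (ecomp one b)) d).
      apply: (lin_inS (n:=n)); apply: inS_mul; last exact: (proj1 Hd).
      by apply: inS_mul => //; apply: inS_mul => //; apply: inS_one_r.
    apply: end_ext => v j; rewrite ezeroE.
    have := f_equal (fun e : End r => e v j) Hx; have := f_equal (fun e : End r => e v j) Hy.
    rewrite !ezeroE => Ey Ex.
    change ((ecomp (ecomp a (ecomp one b)) d) (eadd x y v) j = 0).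
    rewrite (lin_add L (u := x v) (w := y v)) //.
    change ((ecomp (ecomp a (ecomp one b)) (ecomp d x)) v j +
      (ecomp (ecomp a (ecomp one b)) (ecomp d y)) v j = 0).
    by rewrite Ex Ey addr0.
  + have L : lin (ecomp (ecomp a (ecomp one b)) d).
      apply: (lin_inS (n:=n)); apply: inS_mul; last exact: (proj1 Hd).
      by apply: inS_mul => //; apply: inS_mul => //; apply: inS_one_r.
    apply: end_ext => v j; rewrite ezeroE.
    have := f_equal (fun e : End r => e v j) Hx; rewrite !ezeroE => Ex.
    change ((ecomp (ecomp a (ecomp one b)) d) (escale c x v) j = 0).
    rewrite (lin_scale L (c := c) (u := x v)) //.
    change (c * (ecomp (ecomp a (ecomp one b)) (ecomp d x)) v j = 0).
    by rewrite Ex mulr0.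
- move=> Hw; apply: end_ext => v j; rewrite ezeroE.
  have := f_equal (fun e : End r => e v j) (Hx d w Hd Hw).
  have := f_equal (fun e : End r => e v j) (Hy d w Hd Hw).
  rewrite !ezeroE => Ey Ex.
  change (ecomp x (ecomp d w) v j + ecomp y (ecomp d w) v j = 0).
  by rewrite Ex Ey addr0.
- move=> Hw; apply: end_ext => v j; rewrite ezeroE.
  have := f_equal (fun e : End r => e v j) (Hx d w Hd Hw).
  rewrite !ezeroE => Ex.
  change (c * ecomp x (ecomp d w) v j = 0).
  by rewrite Ex mulr0.
Qed.

End Ideal.

Section Tele.
Variable r : nat.
Variable b : nat -> bool.

Lemma prod_exprz (P : pred 'I_r) (e : 'I_r -> int) :
  \prod_(l < r | P l) q ^ e l = q ^ (\sum_(l < r | P l) e l).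
Proof.
by rewrite (big_morph (fun m : int => q ^ m) (fun a b => expfzDr a b q_neq0) (expr0z q)).
Qed.

Definition tterm (k : nat) : Kq := (ind (b k))%:~R *
  (\prod_(l < r | (k < l)%N) q ^ ind (b l)) * (\prod_(l < r | (l < k)%N) q ^ (- ind (b l))).

Definition S1 (k : nat) : int := \sum_(l < r | (k <= l)%N) ind (b l).
Definition S2 (k : nat) : int := \sum_(l < r | (l < k)%N) ind (b l).
Definition TT (k : nat) : Kq := q ^ (S1 k - S2 k).

Lemma S1S k : (k < r)%N -> S1 k = ind (b k) + S1 k.+1.
Proof.
move=> hk; rewrite /S1 (bigD1 (Ordinal hk)) //=; congr (_ + _).
by apply: eq_bigl => l; rewrite -val_eqE /= ltn_neqAle andbC eq_sym.
Qed.

Lemma S2S k : (k < r)%N -> S2 k.+1 = S2 k + ind (b k).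
Proof.
move=> hk; rewrite /S2 (bigD1 (Ordinal hk)) //= addrC; congr (_ + _).
by apply: eq_bigl => l; rewrite -val_eqE /= ltnS ltn_neqAle andbC.
Qed.

Lemma TT_diff k : (k < r)%N -> TT k - TT k.+1 = (q - q^-1) * tterm k.
Proof.
move=> hk; rewrite /TT /tterm S1S // S2S // !prod_exprz sumrN -mulrA -(expfzDr _ _ q_neq0).
rewrite -/(S1 k.+1) -/(S2 k).
rewrite /ind; case: (b k) => /=; last by rewrite add0r addr0 subrr mul0r mulr0.
rewrite mulr1z mul1r mulrBl -addrA (expfzDr 1 (S1 k.+1 - S2 k) q_neq0) expr1z.
by rewrite opprD addrA (expfzDr (S1 k.+1 - S2 k) (-1) q_neq0) -invr_expz expr1z [q^-1 * _]mulrC.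
Qed.

Lemma tele_sum : (q - q^-1) * \sum_(k < r) tterm k =
  q ^ (\sum_(l < r) ind (b l)) - q ^ (- \sum_(l < r) ind (b l)).
Proof.
rewrite mulr_sumr -(big_mkord xpredT (fun k => (q - q^-1) * tterm k)).
rewrite (telescope_sumr_eq (fun k => - TT k)) // => [|k /andP [_ hk]]; last first.
  by rewrite -TT_diff // opprK addrC.
rewrite /TT /S1 /S2 opprK addrC.
have -> : \sum_(l < r | (0 <= l)%N) ind (b l) = \sum_(l < r) ind (b l) by [].
have -> : \sum_(l < r | (l < 0)%N) ind (b l) = 0 by rewrite big_pred0.
have -> : \sum_(l < r | (r <= l)%N) ind (b l) = 0.
  by rewrite big_pred0 // => l; rewrite leqNgt ltn_ord.
have -> : \sum_(l < r | (l < r)%N) ind (b l) = \sum_(l < r) ind (b l).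
  by apply: eq_bigl => l; rewrite ltn_ord.
by rewrite subr0 sub0r.
Qed.

End Tele.
Section Cells.
Variables (n r : nat).
Hypothesis n_gt1 : (1 < n)%N.

Lemma n_gt0 : (0 < n)%N. Proof. exact: ltnW. Qed.

Definition cellv (t : int) : nat := `|((t - 1) %% n)%Z|%N.

Lemma cellvE t : (cellv t)%:Z = ((t - 1) %% n)%Z.
Proof. by rewrite /cellv gez0_abs // modz_ge0 // eqz_nat -lt0n n_gt0. Qed.

Lemma cellv_lt t : (cellv t < n)%N.
Proof. by rewrite -ltz_nat cellvE ltz_pmod // ltz_nat n_gt0. Qed.

Definition cell (t : int) : 'I_n := Ordinal (cellv_lt t).

Lemma congrE (i : nat) (t : int) : congr n i.+1 t = (cellv t == i %% n)%N.
Proof.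
rewrite /congr -eqz_nat cellvE -modz_nat eqz_mod_dvd.
by congr (_ %| _)%Z; rewrite -addn1 PoszD; ring.
Qed.

Lemma congr_cell (c : 'I_n) t : congr n c.+1 t = (cell t == c).
Proof. by rewrite congrE modn_small. Qed.

Lemma congr_cellS (c : 'I_n) t : congr n c.+2 t = (cell t == ordS c).
Proof. by rewrite congrE. Qed.

Lemma cellS t : cell (t + 1) = ordS (cell t).
Proof.
apply: val_inj => /=; apply/eqP.
by rewrite -eqz_nat -modz_nat -addn1 PoszD !cellvE modzDml addrK subrK.
Qed.

Lemma congr_cellP (c : 'I_n) t : congr n c.+1 (t - 1) = (cell t == ordS c).
Proof.
rewrite congr_cell; have -> : t = (t - 1) + 1 by rewrite subrK.
by rewrite cellS (inj_eq (@ordS_inj n)) subrK.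
Qed.

Lemma ordS_neq (c : 'I_n) : ordS c != c.
Proof.
apply/eqP => /(congr1 val) /=; case: (ltnP c.+1 n) => h.
  by rewrite modn_small // => /eqP; rewrite eqn_leq ltnn.
have Hcn : c.+1 = n by apply/eqP; rewrite eqn_leq h ltn_ord.
by rewrite Hcn modnn => E; move: n_gt1; rewrite -Hcn -E.
Qed.


Definition cc (c : 'I_n) (j : Idx r) : nat := #|[pred l : 'I_r | cell (j l) == c]|.
Definition wteq (j j0 : Idx r) : bool := [forall c, cc c j == cc c j0].
Definition IndJ (j0 : Idx r) : End r := D (fun j => if wteq j j0 then 1 else 0).

Lemma cnt_cc (c : 'I_n) j : cnt n c.+1 j = cc c j.
Proof. by apply: eq_card => l; rewrite !inE congr_cell. Qed.

Lemma IndJ_Ind j0 : IndJ j0 = @Ind n r (fun c => cc c j0).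
Proof.
apply: D_ext => j; rewrite /wteq; congr (if _ then _ else _).
by apply: eq_forallb => c; rewrite cnt_cc.
Qed.

Lemma inS_IndJ j0 : inS n (IndJ j0).
Proof. rewrite IndJ_Ind; exact: inS_Ind. Qed.

Lemma shiftE (k : 'I_r) d (j : Idx r) l : shift k d j l = if l == k then j l + d else j l.
Proof. by rewrite ffunE. Qed.

Lemma cc_shift (c : 'I_n) (k : 'I_r) j :
  (cc c (shift k 1 j) + (cell (j k) == c) = cc c j + (ordS (cell (j k)) == c))%N.
Proof.
rewrite /cc (cardD1 k) [in RHS](cardD1 k) !inE shiftE eqxx cellS.
have -> : #|[predD1 [pred l : 'I_r | cell (shift k 1 j l) == c] & k]| =
          #|[predD1 [pred l : 'I_r | cell (j l) == c] & k]|.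
  by apply: eq_card => l; rewrite !inE shiftE; case: eqP.
set a := nat_of_bool (ordS _ == c); set b := nat_of_bool (cell _ == c); set X := #|_|; lia.
Qed.

Lemma wteq_shift (j j0 : Idx r) (k k0 : 'I_r) : cell (j k) = cell (j0 k0) ->
  wteq (shift k 1 j) (shift k0 1 j0) = wteq j j0.
Proof.
move=> E; apply: eq_forallb => c.
have H1 := cc_shift c k j; have H2 := cc_shift c k0 j0; rewrite E in H1.
apply/eqP/eqP => H.
  by apply/eqP; rewrite -(eqn_add2r (ordS (cell (j0 k0)) == c)) -H1 -H2 H.
by apply/eqP; rewrite -(eqn_add2r (cell (j0 k0) == c)) H1 H2 H.
Qed.

Lemma wteq_refl j : wteq j j.
Proof. by apply/forallP => c. Qed.

Lemma cc0 (d : 'I_n) j l : cc d j = 0%N -> cell (j l) != d.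
Proof. by move=> /card0_eq /(_ l); rewrite !inE => ->. Qed.

Lemma wteq_cc (j j0 : Idx r) c : wteq j j0 -> cc c j = cc c j0.
Proof. by move=> /forallP /(_ c) /eqP. Qed.

Lemma sum_ind (P : pred 'I_r) : \sum_(l < r) ind (P l) = (#|P|)%:Z.
Proof.
rewrite -sum1_card (big_mkcond P) /=.
rewrite (big_morph Posz PoszD (erefl (Posz 0%N))); apply: eq_bigr => l _.
by rewrite /ind; case: (P l).
Qed.

Lemma qnum_neq0 (a : nat) : (0 < a)%N -> q ^ (a%:Z) - q ^ (- a%:Z) != 0.
Proof.
move=> ha; rewrite subr_eq0 -invr_expz; apply/eqP => E.
have E' : q ^+ a = (q ^+ a)^-1 by exact: E.
have : q ^+ (a + a) = q ^+ 0.
  by rewrite exprD {2}E' mulfV ?expr0 // expf_neq0 // q_neq0.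
by move/qX_inj; lia.
Qed.

Lemma qden_neq0 : q - q^-1 != 0.
Proof. by have := qnum_neq0 (ltn0Sn 0); rewrite expr1z -invr_expz expr1z. Qed.

Section EF.
Variables (j0 : Idx r) (k0 : 'I_r).
Let c := cell (j0 k0).
Hypothesis empty : cc (ordS c) j0 = 0%N.

Definition cE (k : 'I_r) (j : Idx r) : Kq := (ind (congr n c.+1 (j k)))%:~R *
  \prod_(l < r | (k < l)%N) q ^ Kt n c.+1 (j l).
Definition cF (k : 'I_r) (j : Idx r) : Kq := (ind (congr n c.+1 (j k - 1)))%:~R *
  \prod_(l < r | (l < k)%N) q ^ (- Kt n c.+1 (j l)).

Lemma genE_E (v : Vec r) j : @genE n r c.+1 v j = \sum_(k < r) cE k j * v (shift k 1 j).
Proof. by rewrite /genE esum_mapE big_enum. Qed.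

Lemma genF_E (v : Vec r) j : @genF n r c.+1 v j = \sum_(k < r) cF k j * v (shift k (-1) j).
Proof. by rewrite /genF esum_mapE big_enum. Qed.

Lemma EF_point (v : Vec r) j :
  ecomp (@genE n r c.+1) (ecomp (IndJ (shift k0 1 j0)) (ecomp (@genF n r c.+1) (IndJ j0))) v j
  = (if wteq j j0 then 1 else 0) * (\sum_(k < r) cE k j * cF k (shift k 1 j)) * v j.
Proof.
rewrite ecompE genE_E mulr_sumr mulr_suml; apply: eq_bigr => k _.
rewrite ecompE DE ecompE genF_E.
have [hk|hk] := eqVneq (cell (j k)) c; last first.
  by rewrite /cE congr_cell (negbTE hk) /= !mul0r mulr0 mul0r.
rewrite wteq_shift //.
case Hw: (wteq j j0); last by rewrite !mul0r mulr0.
rewrite (bigD1 k) //= big1 => [|k' hk'].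
  by rewrite shiftK Hw !mul1r addr0 mulrA.
have e' : cc (ordS c) j = 0%N by rewrite (wteq_cc _ Hw).
by rewrite /cF shiftE (negbTE hk') congr_cellP (negbTE (cc0 k' e')) /= !mul0r.
Qed.

Definition bj (j : Idx r) (m : nat) : bool :=
  if insub m is Some l then cell (j (l : 'I_r)) == c else false.

Lemma bjE j (l : 'I_r) : bj j l = (cell (j l) == c).
Proof. by rewrite /bj valK. Qed.

Lemma coef_tterm j : wteq j j0 ->
  \sum_(k < r) cE k j * cF k (shift k 1 j) = \sum_(k < r) tterm r (bj j) k.
Proof.
move=> Hw; have e' : cc (ordS c) j = 0%N by rewrite (wteq_cc _ Hw).
have Kt_E l : Kt n c.+1 (j l) = ind (bj j l).
  by rewrite /Kt congr_cell congr_cellS (negbTE (cc0 l e')) bjE /ind subr0.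
apply: eq_bigr => k _; rewrite /cE /cF /tterm shiftE eqxx addrK congr_cell -bjE.
rewrite (eq_bigr (fun l : 'I_r => q ^ ind (bj j l))) => [|l _]; last by rewrite Kt_E.
have -> : \prod_(l < r | (l < k)%N) q ^ (- Kt n c.+1 (shift k 1 j l)) =
    \prod_(l < r | (l < k)%N) q ^ (- ind (bj j l)).
  apply: eq_bigr => l hl; rewrite shiftE.
  have -> : (l == k) = false by apply/eqP => E; move: hl; rewrite E ltnn.
  by rewrite Kt_E.
by rewrite /ind; case: (bj j k) => /=; rewrite ?mulr1z ?mul1r ?mul0r.
Qed.

Lemma EF_id : ecomp (@genE n r c.+1) (ecomp (IndJ (shift k0 1 j0))
    (ecomp (@genF n r c.+1) (IndJ j0)))
  = escale ((q ^ ((cc c j0)%:Z) - q ^ (- (cc c j0)%:Z)) / (q - q^-1)) (IndJ j0).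
Proof.
apply: end_ext => v j; rewrite EF_point escaleE DE.
case Hw: (wteq j j0); last by rewrite !mul0r mulr0.
rewrite coef_tterm // -(mulKf qden_neq0 (\sum_(k < r) tterm r (bj j) k)) tele_sum.
rewrite sum_ind -(wteq_cc c Hw) /cc.
have -> : #|[pred l : 'I_r | bj j l]| = #|[pred l : 'I_r | cell (j l) == c]|.
  by apply: eq_card => l; rewrite !inE bjE.
by rewrite !mul1r [_^-1 * _]mulrC.
Qed.

Lemma inS_genE : inS n (@genE n r c.+1).
Proof. by apply: inS_gen; left; exists c.+1; split; [by []|exact: ltn_ord|exact: Or41]. Qed.

Lemma inS_genF : inS n (@genF n r c.+1).
Proof. by apply: inS_gen; left; exists c.+1; split; [by []|exact: ltn_ord|exact: Or42]. Qed.

Lemma J_move : Jset n (IndJ (shift k0 1 j0)) -> Jset n (IndJ j0).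
Proof.
move=> H.
have a0 : (0 < cc c j0)%N by apply/card_gt0P; exists k0; rewrite inE.
set s := (q ^ ((cc c j0)%:Z) - q ^ (- (cc c j0)%:Z)) / (q - q^-1).
have s0 : s != 0 by rewrite mulf_neq0 ?invr_neq0 ?qnum_neq0 ?qden_neq0.
have -> : IndJ j0 = escale s^-1 (escale s (IndJ j0)).
  by apply: end_ext => v j; rewrite !escaleE mulKf.
apply: J_scale; rewrite -EF_id.
apply: J_mull; first exact: inS_genE.
apply: J_mulr => //; apply: inS_mul; [exact: inS_genF|exact: inS_IndJ].
Qed.

End EF.

Definition colset (j : Idx r) : {set 'I_r * 'I_r} :=
  [set x | (x.1 != x.2) && (cell (j x.1) == cell (j x.2))].
Definition col (j : Idx r) : nat := #|colset j|.

Lemma cc0' (d : 'I_n) (j : Idx r) : (forall l, cell (j l) != d) -> cc d j = 0%N.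
Proof. by move=> H; apply: eq_card0 => l; rewrite !inE (negbTE (H l)). Qed.

Lemma col_shift (j : Idx r) (k : 'I_r) :
  (forall l, cell (j l) != ordS (cell (j k))) ->
  (col (shift k 1 j) <= col j)%N /\
  ((exists2 l, l != k & cell (j l) = cell (j k)) -> (col (shift k 1 j) < col j)%N).
Proof.
move=> He.
have nk x : x \in colset (shift k 1 j) -> (x.1 != k) && (x.2 != k).
  case: x => a b; rewrite inE /= !shiftE => /andP [ab].
  case: (eqVneq a k) => [ea|ak]; case: (eqVneq b k) => [eb|bk].
  - by move: ab; rewrite ea eb eqxx.
  - by rewrite ea cellS eq_sym (negbTE (He b)).
  - by rewrite eb cellS (negbTE (He a)).
  - by [].
have sub : colset (shift k 1 j) \subset colset j.
  apply/subsetP => x hx; have /andP [h1 h2] := nk x hx; move: hx.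
  by rewrite !inE !shiftE (negbTE h1) (negbTE h2).
split; first exact: subset_leq_card.
move=> [l lk El]; apply: proper_card; apply/properP; split => //.
exists (k, l); first by rewrite inE /= eq_sym lk El eqxx.
by apply/negP => /nk /=; rewrite eqxx.
Qed.

Lemma ordS_val (c : 'I_n) : val (ordS c) = (c.+1 %% n)%N.
Proof. by []. Qed.

Lemma iter_val t (c : 'I_n) : val (iter t (@ordS n) c) = ((c + t) %% n)%N.
Proof.
elim: t => [|t IH]; first by rewrite addn0 modn_small.
by rewrite iterS ordS_val IH -addn1 modnDml addn1 addnS.
Qed.

Lemma iter_inj a b (c : 'I_n) : (a < n)%N -> (b < n)%N ->
  iter a (@ordS n) c = iter b (@ordS n) c -> a = b.
Proof.
move=> ha hb /(congr1 val); rewrite !iter_val => /eqP.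
by rewrite eqn_modDl !modn_small // => /eqP.
Qed.

Lemma J_move' (j : Idx r) (k : 'I_r) : (forall l, cell (j l) != ordS (cell (j k))) ->
  Jset n (IndJ (shift k 1 j)) -> Jset n (IndJ j).
Proof. by move=> H; apply: J_move; apply: cc0'. Qed.

Lemma chain m : forall (j : Idx r) (c : 'I_n), (m < n)%N ->
  (exists k1 k2, [/\ k1 != k2, cell (j k1) = c & cell (j k2) = c]) ->
  (forall t, (0 < t < m)%N -> exists l, cell (j l) = iter t (@ordS n) c) ->
  (forall l, cell (j l) != iter m (@ordS n) c) ->
  exists j', (col j' < col j)%N /\ (Jset n (IndJ j') -> Jset n (IndJ j)).
Proof.
elim: m => [|[|m] IH] j c hm [k1 [k2 [k12 h1 h2]]] hocc hemp.
- by move: (hemp k1); rewrite /= h1 eqxx.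
- have He : forall l, cell (j l) != ordS (cell (j k1)) by move=> l; rewrite h1; exact: hemp.
  exists (shift k1 1 j); split; last exact: J_move'.
  apply: (proj2 (col_shift He)); exists k2; first by rewrite eq_sym.
  by rewrite h1 h2.
- set d := iter m.+1 (@ordS n) c.
  have [k hk] : exists l, cell (j l) = d by apply: hocc; rewrite /= ltnSn.
  have He : forall l, cell (j l) != ordS (cell (j k)) by move=> l; rewrite hk; exact: hemp.
  have [cle clt] := col_shift He.
  have Jm := J_move' He.
  case: (boolP [exists l, (l != k) && (cell (j l) == d)]) => [/existsP [l /andP [lk /eqP El]]|].
    exists (shift k 1 j); split => //; apply: clt; exists l => //; by rewrite El hk.
  move/existsPn => Hno.
  have dc : d != c.
    apply/eqP => E; have := @iter_inj m.+1 0 c (ltnW hm) (ltn_trans (ltn0Sn _) hm).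
    by move=> /(_ E).
  have k1k : k1 != k by apply/eqP => E; move: dc; rewrite -hk -E h1 eqxx.
  have k2k : k2 != k by apply/eqP => E; move: dc; rewrite -hk -E h2 eqxx.
  have [j'' [c'' J'']] : exists j', (col j' < col (shift k 1 j))%N /\
      (Jset n (IndJ j') -> Jset n (IndJ (shift k 1 j))).
    apply: (IH _ c (ltnW hm)).
    + by exists k1, k2; rewrite !shiftE (negbTE k1k) (negbTE k2k).
    + move=> t /andP [t0 tm]; have [l hl] : exists l, cell (j l) = iter t (@ordS n) c.
        by apply: hocc; rewrite t0 ltnS ltnW.
      exists l; rewrite shiftE; case: eqP => [E|_] //.
      have := @iter_inj t m.+1 c (ltn_trans tm (ltnW hm)) (ltnW hm).
      by rewrite -/d -hk -hl E => /(_ erefl) tE; move: tm; rewrite tE ltnn.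
    + move=> l; rewrite shiftE; case: (eqVneq l k) => [->|lk].
        by rewrite cellS hk ordS_neq.
      by have := Hno l; rewrite lk.
  exists j''; split; first exact: leq_trans c'' cle.
  by move=> H; apply: Jm; apply: J''.
Qed.

Section Comb.
Hypothesis r_gt0 : (0 < r)%N.
Hypothesis r_lt : (r < n)%N.

Lemma exists_empty (j : Idx r) : exists e : 'I_n, forall l, cell (j l) != e.
Proof.
case: (boolP [exists e : 'I_n, [forall l, cell (j l) != e]]) =>
  [/existsP [e /forallP He]|/existsPn H]; first by exists e.
have sub : [set: 'I_n] \subset [set cell (j l) | l in 'I_r].
  apply/subsetP => e _; have := H e; rewrite negb_forall => /existsP [l].
  by rewrite negbK => /eqP <-; apply: imset_f.
have := leq_trans (subset_leq_card sub) (leq_imset_card _ _).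
by rewrite cardsT !card_ord leqNgt r_lt.
Qed.

Lemma phase1 (j : Idx r) : (0 < col j)%N ->
  exists j', (col j' < col j)%N /\ (Jset n (IndJ j') -> Jset n (IndJ j)).
Proof.
move=> /card_gt0P [[k1 k2]]; rewrite inE /= => /andP [k12 /eqP h12].
set c := cell (j k1).
have [e He] := exists_empty j.
pose t0 := ((e + n - c) %% n)%N.
have t0E : iter t0 (@ordS n) c = e.
  apply: val_inj; rewrite iter_val /t0 modnDmr addnBA; last first.
    by apply: leq_trans (ltnW (ltn_ord c)) (leq_addl _ _).
  by rewrite addKn modnDr modn_small.
have t0n : (t0 < n)%N by rewrite ltn_pmod // n_gt0.
have t0p : (0 < t0)%N.
  rewrite lt0n; apply/eqP => E; move: (He k1); rewrite -t0E E /= eqxx //.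
pose P t := (0 < t)%N && [forall l, cell (j l) != iter t (@ordS n) c].
have exP : exists t, P t.
  by exists t0; rewrite /P t0p /=; apply/forallP => l; rewrite t0E.
case: (ex_minnP exP) => m /andP [m0 /forallP Pm] minm.
have mt0 : (m <= t0)%N by apply: minm; rewrite /P t0p; apply/forallP => l; rewrite t0E.
apply: (chain (m := m) (c := c)).
- exact: leq_ltn_trans mt0 t0n.
- by exists k1, k2; split.
- move=> t /andP [t0' tm].
  case: (boolP [forall l, cell (j l) != iter t (@ordS n) c]) => [H|].
    by have := minm t; rewrite /P t0' H leqNgt tm => /(_ erefl).
  by rewrite negb_forall => /existsP [l]; rewrite negbK => /eqP El; exists l.
- exact: Pm.
Qed.

Definition p (d : 'I_n) : nat := if (d < r)%N then (d + (n - r))%N else (d - r)%N.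

Lemma p_lt d : (p d < n)%N.
Proof. have := ltn_ord d; rewrite /p; case: ifPn => h; lia. Qed.

Definition pO (d : 'I_n) : 'I_n := Ordinal (p_lt d).

Lemma pO_inj : injective pO.
Proof.
move=> d1 d2 /(congr1 val) /=; rewrite /p => E; apply: val_inj => /=.
have := ltn_ord d1; have := ltn_ord d2.
by move: E; case: ifPn => h1; case: ifPn => h2; lia.
Qed.

Lemma p_ordS (d : 'I_n) : ((d : nat) != r.-1) -> p (ordS d) = (p d).+1.
Proof.
move=> /eqP hd; rewrite /p ordS_val; have := ltn_ord d.
case: (ltnP d.+1 n) => h1 h2.
  by rewrite modn_small //; case: ifPn => a; case: ifPn => b; lia.
have dn : d.+1 = n by lia.
by rewrite dn modnn /=; case: ifPn => a; case: ifPn => b; lia.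
Qed.

Definition sump (j : Idx r) : nat := \sum_(l < r) p (cell (j l)).

Lemma sump_le (j : Idx r) : (sump j <= n * r)%N.
Proof.
have H : (\sum_(l < r) p (cell (j l)) <= \sum_(l < r) n)%N.
  by apply: leq_sum => l _; exact: ltnW (p_lt _).
by rewrite /sump (leq_trans H) // sum_nat_const card_ord mulnC.
Qed.

Lemma sump_shift (j : Idx r) (k : 'I_r) : (cell (j k) : nat) != r.-1 ->
  sump (shift k 1 j) = (sump j).+1.
Proof.
move=> hk; rewrite /sump (bigD1 k) //= [in RHS](bigD1 k) //= shiftE eqxx cellS p_ordS //.
rewrite addSn; congr (_ + _)%N.+1; apply: eq_bigr => l lk.
by rewrite shiftE (negbTE lk).
Qed.

Definition hs (t : nat) (x : 'I_(n - t)) : 'I_n.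
Proof. refine (@Ordinal n (t + x) _); by rewrite -ltn_subRL ltn_ord. Defined.

Lemma hs_inj (t : nat) : injective (@hs t).
Proof. by move=> x y /(congr1 val) /= /eqP; rewrite eqn_add2l => /eqP E; apply: val_inj. Qed.

Lemma card_hs (t : nat) : #|[set @hs t x | x in 'I_(n - t)]| = (n - t)%N.
Proof. by rewrite card_imset ?card_ord //; exact: hs_inj. Qed.

Lemma terminal (j : Idx r) : col j = 0%N ->
  (forall k, (cell (j k) : nat) != r.-1 -> exists l, cell (j l) = ordS (cell (j k))) ->
  forall c : 'I_n, cc c j = (c < r)%N.
Proof.
move=> c0 up.
have inj : injective (fun l => cell (j l)).
  move=> a b E; apply/eqP; apply/negPn/negP => ab.
  have hab : (a, b) \in colset j by rewrite inE /= ab E eqxx.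
  have : (0 < col j)%N by apply/card_gt0P; exists (a, b).
  by rewrite c0.
pose g l := pO (cell (j l)).
have ginj : injective g by move=> a b /pO_inj /inj.
pose G := [set g l | l in 'I_r].
have cG : #|G| = r by rewrite card_imset // card_ord.
have pr1 : p (Ordinal (n:=n) (m:=r.-1) (leq_ltn_trans (leq_pred r) r_lt)) = n.-1.
  by rewrite /p /=; case: ifPn => h; lia.
have upg a : (g a < n.-1)%N -> exists b, (g b : nat) = (g a).+1.
  move=> ha; have ne : (cell (j a) : nat) != r.-1.
    apply/eqP => E; move: ha; rewrite /g /= -pr1.
    have -> : cell (j a) = Ordinal (leq_ltn_trans (leq_pred r) r_lt) by apply: val_inj.
    by rewrite ltnn.
  have [b hb] := up a ne; exists b; by rewrite /g /= hb p_ordS.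
have low a : (n - r <= g a)%N.
  rewrite leqNgt; apply/negP => ha; set t := (g a : nat).
  have reach s : (s < n - t)%N -> exists b, (g b : nat) = (t + s)%N.
    elim: s => [|s IH] hs'; first by exists a; rewrite addn0.
    have [b hb] := IH (ltnW hs').
    have [b' hb'] : exists b', (g b' : nat) = (g b).+1 by apply: upg; rewrite hb; lia.
    by exists b'; rewrite hb' hb addnS.
  have sub : [set @hs t x | x in 'I_(n - t)] \subset G.
    apply/subsetP => y /imsetP [x _ ->]; have [b hb] := reach x (ltn_ord x).
    by apply/imsetP; exists b => //; apply: val_inj => /=; rewrite -hb.
  have := subset_leq_card sub; rewrite card_hs cG; lia.
have sub : G \subset [set @hs (n - r) x | x in 'I_(n - (n - r))].
  apply/subsetP => y /imsetP [a _ ->].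
  have hx : (g a - (n - r) < n - (n - r))%N by have := ltn_ord (g a); have := low a; lia.
  by apply/imsetP; exists (Ordinal hx) => //; apply: val_inj => /=; rewrite subnKC // low.
have GE : G = [set @hs (n - r) x | x in 'I_(n - (n - r))].
  by apply/eqP; rewrite eqEcard sub card_hs cG; lia.
move=> c; case: (ltnP c r) => hc /=.
  have : pO c \in G.
    rewrite GE; apply/imsetP.
    have hx : (p c - (n - r) < n - (n - r))%N by rewrite /p hc; have := ltn_ord c; lia.
    exists (Ordinal hx) => //; apply: val_inj => /=; rewrite /p hc; lia.
  move=> /imsetP [l _ /pO_inj El].
  apply: (@eq_card1 _ l) => l'; rewrite !inE; apply/eqP/eqP => [E|->] //.
  by apply: inj; rewrite /= E El.
apply: cc0' => l; apply/eqP => E; have := low l; rewrite /g E /= /p.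
by rewrite ltnNge hc /=; have := ltn_ord c; lia.
Qed.


Lemma IndJ_base (j : Idx r) : (forall c : 'I_n, cc c j = (c < r)%N) -> IndJ j = @one_r n r.
Proof.
move=> H; rewrite IndJ_Ind one_rE.
have -> : (fun c : 'I_n => cc c j) = (fun c : 'I_n => ((c : nat) < r)%N : nat).
  by apply: functional_extensionality => c; rewrite H.
by [].
Qed.

Lemma J_one : Jset n (@one_r n r).
Proof.
have E : ecomp (@eid r) (ecomp (@one_r n r) (@eid r)) = @one_r n r by reflexivity.
by rewrite -E; apply: J_base; apply: inS_id.
Qed.

Lemma all_J (j : Idx r) : Jset n (IndJ j).
Proof.
pose N := (n * r).+1.
pose M (j : Idx r) := (col j * N + (n * r - sump j))%N.
suff H : forall m (j : Idx r), (M j < m)%N -> Jset n (IndJ j) by apply: (H (M j).+1).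
elim=> [|m IH] j' hm; first by [].
case: (posnP (col j')) => hc; last first.
  have [j'' [hlt Jimp]] := phase1 hc.
  apply: Jimp; apply: IH.
  have hs := sump_le j''.
  have hA : ((col j'').+1 * N <= col j' * N)%N by rewrite leq_mul2r hlt orbT.
  move: hm hA hs; rewrite /M mulSn; set A := (col j'' * N)%N; set B := (col j' * N)%N.
  rewrite /N; set NR := (n * r)%N; lia.
case: (boolP [exists k, ((cell (j' k) : nat) != r.-1) &&
    [forall l, cell (j' l) != ordS (cell (j' k))]]) => [/existsP [k /andP [hk /forallP He]]|/existsPn Hno].
  apply: (J_move' He); apply: IH.
  have c0 : col (shift k 1 j') = 0%N by have := (proj1 (col_shift He)); rewrite hc; lia.
  have s1 := sump_shift hk; have s2 := sump_le (shift k 1 j').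
  move: hm; rewrite /M c0 hc !mul0n !add0n s1 => hm.
  move: s2; rewrite s1; set NR := (n * r)%N; lia.
have base := terminal hc.
rewrite IndJ_base; first exact: J_one.
apply: base => k hk; have := Hno k; rewrite hk /= negb_forall => /existsP [l].
by rewrite negbK => /eqP El; exists l.
Qed.

Lemma J_esum (I : Type) (s : seq I) (g : I -> End r) :
  (forall x, Jset n (g x)) -> Jset n (esum [seq g x | x <- s]).
Proof.
move=> H; elim: s => [|x s IH] /=; first exact: J_zero.
exact: J_add.
Qed.

Definition IndL (lam : {ffun 'I_n -> 'I_r.+1}) : End r := @Ind n r (fun c => (lam c : nat)).

Lemma J_IndL lam : Jset n (IndL lam).
Proof.
case: (classic (exists j0 : Idx r, forall c : 'I_n, cnt n c.+1 j0 = lam c)) => [[j0 H]|H].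
  have -> : IndL lam = IndJ j0; last exact: all_J.
  apply: D_ext => j; rewrite /wteq; congr (if _ then _ else _).
  by apply: eq_forallb => c; rewrite cnt_cc -H cnt_cc.
have -> : IndL lam = @ezero r; last exact: J_zero.
rewrite -D_zero; apply: D_ext => j; case: forallP => // Hj.
by exfalso; apply: H; exists j => c; apply/eqP; apply: Hj.
Qed.

Lemma eid_sum : @eid r = esum [seq IndL lam | lam <- enum {ffun 'I_n -> 'I_r.+1}].
Proof.
apply: end_ext => v j; rewrite esum_mapE big_enum /= eidE.
pose lam0 : {ffun 'I_n -> 'I_r.+1} := [ffun c : 'I_n => inord (cnt n c.+1 j)].
rewrite (bigD1 lam0) //= big1 => [|lam hlam].
  rewrite addr0; case: forallP => [_|H]; first by rewrite mul1r.
  by exfalso; apply: H => c; rewrite ffunE inordK // ltnS cnt_le.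
case: forallP => [H|_]; last by rewrite mul0r.
exfalso; move: hlam; apply/negP; rewrite negbK; apply/eqP/ffunP => c.
by apply: ord_inj; rewrite ffunE inordK ?ltnS ?cnt_le // (eqP (H c)).
Qed.

Lemma jset_eid : Jset n (@eid r).
Proof. rewrite eid_sum; apply: J_esum => lam; exact: J_IndL. Qed.

End Comb.
End Cells.

Lemma conditional (n r : nat) (KEY : Jset n (@eid r))
  (A : algType Kq) (f : End r -> A)
  (fadd : forall x y, inS n x -> inS n y -> f (eadd x y) = f x + f y)
  (fscale : forall c x, inS n x -> f (escale c x) = c *: f x)
  (fmul : forall x y, inS n x -> inS n y -> f (ecomp x y) = f x * f y)
  (fone : f (@eid r) = 1)
  (finj : forall x y, inS n x -> inS n y ->
            f (corner n x) = f (corner n y) -> corner n x = corner n y) :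
  forall x y, inS n x -> inS n y -> f x = f y -> x = y.
Proof.
move=> x y Hx Hy Exy.
pose d := eadd x (escale (-1) y).
have Hd : inS n d by apply: inS_add => //; apply: inS_scale.
have fd : f d = 0 by rewrite /d fadd ?fscale ?Exy ?scaleN1r ?subrr //; apply: inS_scale.
have H1 := @inS_one_r n r.
have f0 : f (@ezero r) = 0.
  have -> : @ezero r = escale 0 (@eid r) by apply: end_ext => v j; rewrite escaleE mul0r.
  by rewrite fscale ?scale0r //; apply: inS_id.
have Id : Iid n d.
  split; first exact: Hd.
  move=> a b Ha Hb.
  have Hda : inS n (ecomp d a) by apply: inS_mul.
  have Hbda : inS n (ecomp b (ecomp d a)) by apply: inS_mul.
  have H0 := @inS_zero n r.
  have -> : @ezero r = corner n (@ezero r).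
    by rewrite /corner ecomp_zero //; apply: (lin_inS (n:=n)).
  apply: finj; [exact: Hbda|exact: H0|].
  have Hc1 : inS n (ecomp (ecomp b (ecomp d a)) (@one_r n r)) by apply: inS_mul.
  have Hc0 : inS n (ecomp (@ezero r) (@one_r n r)) by apply: inS_mul.
  rewrite /corner (fmul _ _ H1 Hc1) (fmul _ _ H1 Hc0) (fmul _ _ Hbda H1) (fmul _ _ H0 H1).
  rewrite (fmul _ _ Hb Hda) (fmul _ _ Hd Ha) fd f0.
  by rewrite !(mul0r, mulr0).
have E := kill KEY Id (J_eq KEY (erefl _)).
apply: end_ext => v j.
have := f_equal (fun e : End r => e v j) E; rewrite ezeroE /=.
by move/eqP; rewrite mulN1r subr_eq0 => /eqP.
Qed.



Theorem proposition3p9 (n r : nat) (hn : (3 <= n)%N) (hr : (3 <= r)%N) (hnr : (r < n)%N)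
  (A : algType Kq) (f : End r -> A)
  (fadd : forall x y, inS n x -> inS n y -> f (eadd x y) = f x + f y)
  (fscale : forall c x, inS n x -> f (escale c x) = c *: f x)
  (fmul : forall x y, inS n x -> inS n y -> f (ecomp x y) = f x * f y)
  (fone : f (@eid r) = 1)
  (fsurj : forall a : A, exists2 x, inS n x & f x = a)
  (finj : forall x y, inS n x -> inS n y ->
            f (corner n x) = f (corner n y) -> corner n x = corner n y) :
  forall x y, inS n x -> inS n y -> f x = f y -> x = y.
Proof.
have n1 : (1 < n)%N by lia.
have r0 : (0 < r)%N by lia.
exact: (conditional (jset_eid n1 r0 hnr) fadd fscale fmul fone finj).
Qed.
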